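(* For any $n\geq 2$ there is a subset $\mathbf{\Pi}$ of permutations on $[n]$ with $|\mathbf{\Pi}|\leq C_0^n$, where $C_0>0$ is a universal constant, having the following property. Let $p\in(0,1/2]$, $\delta\in[1/n,1/2]$, $s\in[-1,0]$, $\nu\in(0,1]$, $L\geq 1$, $T>0$, and let $x\in{\rm Incomp}_n(\delta,\nu)$ be such that $T/2\leq \mathcal{T}_p(x,L)\leq T$. Then there is $\sigma=\sigma(x)\in\mathbf{\Pi}$ such that the vector $\big(\mathbf{Y}_{\sigma(i)}(p,x,L,s)\big)_{i=1}^n$ belongs to $\mathcal A(n,\delta,\nu,T)$.
   Context: Notation and definitions. For $\delta,\nu\in(0,1]$, ${\rm Comp}_n(\delta,\nu)$ is the set of unit vectors $x\in\mathbb{R}^n$ for which there is $y\in\mathbb{R}^n$ with at most $\delta n$ nonzero coordinates and $\|x-y\|_2\leq\nu$; ${\rm Incomp}_n(\delta,\nu):=S^{n-1}\setminus{\rm Comp}_n(\delta,\nu)$. The Lévy concentration function of a real random variable $Z$ is $\mathcal L(Z,t)=\sup_{\lambda\in\mathbb{R}}\mathbb{P}\{|Z-\lambda|\leq t\}$. For $p\in(0,1/2]$, $x\in S^{n-1}$ and $L>0$, the threshold $\mathcal{T}_p(x,L)$ is the supremum of all $t\in(0,1]$ such that $\mathcal L\big(\sum_{i=1}^n b_ix_i,t\big)>Lt$, where $b_1,\dots,b_n$ are independent Bernoulli($p$) random variables (taking value $1$ with probability $p$ and $0$ with probability $1-p$). For $p\in(0,1/2]$, $s\in[-1,0]$, $x\in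 S^{n-1}$, $L\geq1$, $\mathbf{Y}(p,x,L,s)\in\mathbb{Z}^n$ denotes a fixed (chosen once for each $(p,x,L,s)$) integer vector satisfying, with universal constants $C_1,c_1>0$: (a) $\big\|\frac{\sqrt n}{\mathcal{T}_p(x,L)}x-\mathbf{Y}(p,x,L,s)\big\|_\infty\leq1$; (b) $\mathbb{P}\{|\sum_i b_i\mathbf{Y}_i(p,x,L,s)+\frac{s\sqrt n}{\mathcal{T}_p(x,L)}\sum_i x_i|\leq t\}\leq \frac{C_1L\mathcal{T}_p(x,L)}{\sqrt n}t$ for all $t\geq\sqrt n$; (c) $\mathcal L(\sum_i b_i\mathbf{Y}_i(p,x,L,s),\sqrt n)\geq c_1L\mathcal{T}_p(x,L)$; (d) $\big|\frac{\sqrt n}{\mathcal{T}_p(x,L)}\sum_i x_i-\sum_i\mathbf{Y}_i(p,x,L,s)\big|\leq C_1\sqrt n$. (Such a vector exists by a randomized rounding argument.) For $n\geq2$, $\delta\in[1/n,1/2]$, $\nu\in(0,1]$ and $T\in(0,1]$ with $\nu/T\geq2$, the set $\mathcal A(n,\delta,\nu,T)=A_1\times\dots\times A_n\subset\mathbb{Z}^n$ is defined by: for $1\leq j\leq\log_2(\delta n)$ and $2^{-j}\delta n<i\leq2^{-j+1}\delta n$, $A_i:=\mathbb{Z}\cap\big[-\lceil\frac{2^{(j+3)/2}}{\sqrt\delta\,T}\rceil-1,\lceil\frac{2^{(j+3)/2}}{\sqrt\delta\,T}\rceil+1\big]\setminus\big[1-\lfloor\frac{\nu}{T}\rfloor,\lfloor\frac{\nu}{T}\rfloor-1\big]$;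 for $i>\delta n$, $A_i:=\mathbb{Z}\cap\big[-\lceil\frac{\sqrt8}{\sqrt\delta\,T}\rceil-1,\lceil\frac{\sqrt8}{\sqrt\delta\,T}\rceil+1\big]$; and $A_1:=\mathbb{Z}\cap\big[-\lceil\frac{2\sqrt n}{T}\rceil-1,\lceil\frac{2\sqrt n}{T}\rceil+1\big]\setminus\big[1-\lfloor\frac{\nu}{T}\rfloor,\lfloor\frac{\nu}{T}\rfloor-1\big]$. *)

(* Defs.v *)
From HB Require Import structures.
From mathcomp Require Import all_boot all_order all_algebra all_fingroup.
From mathcomp Require Import boolp classical_sets reals.
Set Implicit Arguments. Unset Strict Implicit. Unset Printing Implicit Defensive.
Import Order.TTheory GRing.Theory Num.Theory.
Local Open Scope ring_scope.
Local Open Scope classical_set_scope.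

Section Defs.
Variable R : realType.

(** Probability, for independent Bernoulli(p) variables b_1..b_n, of an event E
    on the outcome b : {ffun 'I_n -> bool} (b i = true means b_i = 1). *)
Definition bprob (n : nat) (p : R) (E : {ffun 'I_n -> bool} -> bool) : R :=
  \sum_(b : {ffun 'I_n -> bool})
     (\prod_(i < n) (if b i then p else 1 - p)) * (E b)%:R.

Definition bsum (n : nat) (y : 'I_n -> R) (b : {ffun 'I_n -> bool}) : R :=
  \sum_(i < n) (b i)%:R * y i.

Definition levy (n : nat) (p : R) (Z : {ffun 'I_n -> bool} -> R) (t : R) : R :=
  sup (range (fun lam : R => bprob p (fun b => `|Z b - lam| <= t))).

Definition Tp (n : nat) (p : R) (x : 'I_n -> R) (L : R) : R :=
  sup [set t : R | 0 < t <= 1 /\ levy p (bsum x) t > L * t].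

Definition unit_vec (n : nat) (x : 'I_n -> R) : Prop := \sum_(i < n) x i ^+ 2 = 1.

Definition Comp (n : nat) (delta nu : R) (x : 'I_n -> R) : Prop :=
  unit_vec x /\
  exists y : 'I_n -> R,
    (#|[set i | y i != 0]|%:R <= delta * n%:R) /\
    Num.sqrt (\sum_(i < n) (x i - y i) ^+ 2) <= nu.

Definition Incomp (n : nat) (delta nu : R) (x : 'I_n -> R) : Prop :=
  unit_vec x /\ ~ Comp delta nu x.

Definition in_box (a : R) (z : int) : Prop :=
  - Num.ceil a - 1 <= z <= Num.ceil a + 1.

Definition out_gap (nu T : R) (z : int) : Prop :=
  ~ (1 - Num.floor (nu / T) <= z <= Num.floor (nu / T) - 1).

(** membership of the 1-based coordinate i in A_i (the three cases of the
    definition of A(n, delta, nu, T), written as a conjunction of implications;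
    the cases are disjoint and cover {1..n}) *)
Definition in_Ai (n : nat) (delta nu T : R) (i : nat) (z : int) : Prop :=
  [/\ (i = 1%N -> in_box (2 * Num.sqrt n%:R / T) z /\ out_gap nu T z),
      (forall j : nat, (1 <= j)%N -> 2 ^+ j <= delta * n%:R ->
         delta * n%:R / 2 ^+ j < i%:R <= delta * n%:R * 2 / 2 ^+ j ->
         in_box (Num.sqrt (2 ^+ (j + 3)) / (Num.sqrt delta * T)) z /\ out_gap nu T z)
    & (delta * n%:R < i%:R -> in_box (Num.sqrt 8 / (Num.sqrt delta * T)) z)].

(** v in A(n, delta, nu, T); coordinate i : 'I_n is the paper's coordinate i+1 *)
Definition in_A (n : nat) (delta nu T : R) (v : 'I_n -> int) : Prop :=
  forall i : 'I_n, in_Ai n delta nu T i.+1 (v i).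

(** Properties (a)-(d) of the rounding map Y (for fixed n), with constants C1, c1 *)
Definition Y_spec (n : nat) (C1 c1 : R)
    (Y : R -> ('I_n -> R) -> R -> R -> ('I_n -> int)) : Prop :=
  forall (p : R) (x : 'I_n -> R) (L s : R),
    0 < p <= 2^-1 -> -1 <= s <= 0 -> unit_vec x -> 1 <= L ->
    let T := Tp p x L in
    let y := fun i => (Y p x L s i)%:~R : R in
    [/\ (forall i, `|Num.sqrt n%:R / T * x i - y i| <= 1),
        (forall t, Num.sqrt n%:R <= t ->
            bprob p (fun b => `|bsum y b + s * Num.sqrt n%:R / T * \sum_(i < n) x i| <= t)
            <= C1 * L * T / Num.sqrt n%:R * t),
        levy p (bsum y) (Num.sqrt n%:R) >= c1 * L * T
      & `|Num.sqrt n%:R / T * \sum_(i < n) x i - \sum_(i < n) y i|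
                   <= C1 * Num.sqrt n%:R].

End Defs.

(* Main.v *)
Require Import Defs.
From HB Require Import structures.
From mathcomp Require Import all_boot all_order all_algebra all_fingroup.
From mathcomp Require Import boolp classical_sets reals.
From mathcomp Require Import zify ring lra.
Import Order.TTheory GRing.Theory Num.Theory.

Set Implicit Arguments. Unset Strict Implicit.

Section NatFacts.
Local Open Scope nat_scope.
Lemma nat_kb (g n : nat) (b : bool) : g <= n -> 2 * g + b < (2 * n).+2.
Proof. case: b => /=; lia. Qed.
Lemma nat_sum5 (a b n : nat) : a <= 2 * n -> b <= n -> 2 * a + b <= 5 * n.
Proof. lia. Qed.
Lemma nat_mono (g g' : nat) (a b : bool) : 2 * g + a <= 2 * g' + b -> g <= g'.
Proof. case: a; case: b => /=; lia. Qed.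
Lemma nat_strict (g g' : nat) : g <= g' -> 2 * g + false < 2 * g' + true.
Proof. simpl; lia. Qed.
Lemma nat_6 n : 5 * n + n = 6 * n. Proof. lia. Qed.
End NatFacts.

Section Sort.
Variables (n K : nat) (k : 'I_n -> nat).
Definition code (e : 'I_n) : nat := (K - k e) * n + e.
Definition predset (e : 'I_n) : {set 'I_n} := [set e' | code e' < code e].

Lemma code_inj : injective code.
Proof.
move=> a b h.
have : code a %% n = code b %% n by rewrite h.
rewrite /code !modnMDl !modn_small ?ltn_ord // => hab.
by apply: val_inj.
Qed.

Lemma rank_lt e : #|predset e| < n.
Proof.
rewrite -[X in _ < X]card_ord -cardsT; apply: proper_card; apply/properP; split.
  exact: finset.subsetT.
by exists e; rewrite ?inE // ltnn.
Qed.

Definition rank (e : 'I_n) : 'I_n := Ordinal (rank_lt e).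

Lemma predset_sub a b : code a < code b -> predset a \proper predset b.
Proof.
move=> hab; apply/properP; split.
  apply/fintype.subsetP=> c; rewrite !inE => hc; exact: ltn_trans hc hab.
by exists a; rewrite !inE ?ltnn.
Qed.

Lemma rank_inj : injective rank.
Proof.
move=> a b /(congr1 val) /= h.
case: (ltngtP (code a) (code b)) => hab.
- by move: (proper_card (predset_sub hab)); rewrite h ltnn.
- by move: (proper_card (predset_sub hab)); rewrite h ltnn.
- exact: code_inj.
Qed.

Definition sortperm : {perm 'I_n} := (perm rank_inj)^-1%g.

Lemma sigP (i : 'I_n) : #|predset (sortperm i)| = i.
Proof.
have : rank (sortperm i) = i by rewrite /sortperm -(permE rank_inj) permKV.
by move/(congr1 val).
Qed.

Lemma code_le_key a b : (forall e, k e < K) -> code a <= code b -> k b <= k a.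
Proof.
move=> hK; rewrite /code => h.
have ha := ltn_ord a; have hb := ltn_ord b.
have := hK a; have := hK b => hkb hka.
rewrite leqNgt; apply/negP => hlt.
have h1 : K - k a >= (K - k b).+1 by lia.
have : ((K - k b).+1) * n <= (K - k a) * n by rewrite leq_mul2r h1 orbT.
rewrite mulSn; lia.
Qed.

Lemma key_lt_code a b : (forall e, k e < K) -> k b < k a -> code a < code b.
Proof.
move=> hK h; rewrite ltnNge; apply/negP => /(code_le_key hK); rewrite leqNgt h.
by [].
Qed.
End Sort.

Local Open Scope ring_scope.

Lemma geom_le (R : realFieldType) (K : nat) : \sum_(j < K) (2^-1 : R) ^+ j <= 2.
Proof.
have : \sum_(j < K) (2^-1 : R) ^+ j = 2 - 2 * (2^-1) ^+ K.
  elim: K => [|K IH]; first by rewrite big_ord0 expr0 mulr1 subrr.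
  by rewrite big_ord_recr /= IH exprS; field.
move=> ->; rewrite lerBlDr lerDl; apply: mulr_ge0 => //; apply: exprn_ge0.
by rewrite invr_ge0.
Qed.

Definition Gset (n K B : nat) : {set {ffun 'I_n -> 'I_K}} :=
  [set f : {ffun 'I_n -> 'I_K} | (\sum_(i < n) (f i : nat) <= B)%N].

Lemma card_Gset (R : realFieldType) n K B :
  (#|Gset n K B|%:R : R) <= 2 ^+ B * 2 ^+ n.
Proof.
have h1 : (#|Gset n K B|%:R : R) = \sum_(f in Gset n K B) 1.
  by rewrite sumr_const.
rewrite h1.
apply: (@le_trans _ _ (\sum_(f in Gset n K B) (2 ^+ B * \prod_i (2^-1 : R) ^+ (f i : nat)))).
  apply: ler_sum => f; rewrite inE => hf.
  rewrite prodrXr.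
  set S := (\sum_i _)%N in hf *.
  have -> : (2 : R) ^+ B = 2 ^+ (B - S) * 2 ^+ S by rewrite -exprD subnK.
  rewrite -mulrA exprVn mulfV ?mulr1; last by rewrite expf_neq0 // pnatr_eq0.
  by apply: exprn_ege1; rewrite ler1n.
apply: (@le_trans _ _ (\sum_(f : {ffun 'I_n -> 'I_K}) (2 ^+ B * \prod_i (2^-1 : R) ^+ (f i : nat)))).
  rewrite [X in _ <= X](bigID (fun f => f \in Gset n K B)) /= lerDl.
  apply: sumr_ge0 => f _; apply: mulr_ge0; first exact: exprn_ge0.
  apply: prodr_ge0 => i _; apply: exprn_ge0; by rewrite invr_ge0.
rewrite -mulr_sumr; apply: ler_wpM2l; first exact: exprn_ge0.
rewrite -(bigA_distr_bigA (fun (i : 'I_n) (j : 'I_K) => (2^-1 : R) ^+ j)) /=.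
have -> : (2:R) ^+ n = \prod_(i < n) 2 by rewrite prodr_const card_ord.
apply: ler_prod => i _; rewrite geom_le andbT.
apply: sumr_ge0 => j _; apply: exprn_ge0; by rewrite invr_ge0.
Qed.

Lemma card_ltn_ord (n a : nat) : (a <= n)%N -> #|[set m : 'I_n | (m < a)%N]| = a.
Proof.
move=> han.
have -> : [set m : 'I_n | (m < a)%N] = [set widen_ord han j | j : 'I_a].
  apply/setP => m; rewrite !inE; apply/idP/imsetP.
    by move=> hm; exists (Ordinal hm) => //; apply: val_inj.
  by case=> j _ ->; rewrite /= ltn_ord.
by rewrite card_imset ?cardsT ?card_ord //; by move=> u v /(congr1 val) /= h; apply: val_inj.
Qed.

Section Key.
Variables (R : realType) (n : nat) (x : 'I_n -> R).
Hypothesis hunit : \sum_(i < n) x i ^+ 2 = 1.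

Definition gk (e : 'I_n) : nat := #|[set m : 'I_n | (2:R) ^+ m < n%:R * x e ^+ 2]|.

Lemma gk_mono a b : x a ^+ 2 <= x b ^+ 2 -> (gk a <= gk b)%N.
Proof.
move=> h; rewrite /gk; apply: subset_leq_card; apply/fintype.subsetP => m; rewrite !inE => hm.
apply: (lt_le_trans hm); apply: ler_wpM2l => //.
Qed.

Lemma gk_le e : (gk e <= n)%N.
Proof. by rewrite /gk -[X in (_ <= X)%N](card_ord n) max_card. Qed.

Lemma sq_le1 e : x e ^+ 2 <= 1.
Proof.
rewrite -hunit (bigD1 e) //= lerDl; apply: sumr_ge0 => i _; exact: sqr_ge0.
Qed.

Lemma gk_up e : n%:R * x e ^+ 2 <= 2 ^+ (gk e).
Proof.
case: (ltnP (gk e) n) => hg.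
  rewrite leNgt; apply/negP => hlt.
  have : ((gk e).+1 <= gk e)%N.
    rewrite -[X in (X <= _)%N](@card_ltn_ord n (gk e).+1) //.
    apply: subset_leq_card; apply/fintype.subsetP => m; rewrite !inE => hm.
    apply: le_lt_trans hlt; apply: ler_weXn2l => //; lra.
  by rewrite ltnn.
apply: (@le_trans _ _ (n%:R)).
  rewrite -[X in _ <= X]mulr1; apply: ler_wpM2l => //; exact: sq_le1.
apply: (@le_trans _ _ (2 ^+ n)).
  rewrite -natrX ler_nat; exact: ltnW (ltn_expl n (isT : (1 < 2)%N)).
apply: ler_weXn2l => //; lra.
Qed.

Lemma gk_low e G : (1 <= G)%N -> (G <= gk e)%N -> 2 ^+ G.-1 < n%:R * x e ^+ 2.
Proof.
move=> hG hGe; rewrite ltNge; apply/negP => hle.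
have hn := gk_le e.
have : (gk e <= G.-1)%N.
  rewrite -[X in (_ <= X)%N](@card_ltn_ord n G.-1); last by lia.
  apply: subset_leq_card; apply/fintype.subsetP => m; rewrite !inE => hm.
  have := lt_le_trans hm hle; rewrite ltr_eXn2l //; lra.
lia.
Qed.

Lemma gk_sum : (\sum_e gk e <= 2 * n)%N.
Proof.
rewrite -(@ler_nat R) natr_sum.
have -> : \sum_e (gk e)%:R = \sum_(m < n) (#|[set e | (2:R) ^+ m < n%:R * x e ^+ 2]|%:R : R).
  rewrite /gk; under eq_bigr do rewrite -sum1_card natr_sum.
  under [X in _ = X]eq_bigr do rewrite -sum1_card natr_sum.
  rewrite (exchange_big_dep xpredT) //=.
  apply: eq_bigr => m _; apply: eq_bigl => e; by rewrite !inE.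
apply: (@le_trans _ _ (\sum_(m < n) n%:R * (2^-1) ^+ m)).
  apply: ler_sum => m _.
  set S := [set e | _].
  have h2 : (0 : R) < 2 ^+ m by apply: exprn_gt0.
  rewrite exprVn ler_pdivlMr // -sum1_card natr_sum mulr_suml.
  apply: (@le_trans _ _ (\sum_(e in S) n%:R * x e ^+ 2)).
    apply: ler_sum => e; rewrite inE mul1r => /ltW //.
  rewrite -mulr_sumr -[X in _ <= X]mulr1; apply: ler_wpM2l => //; rewrite -hunit.
  rewrite [X in _ <= X](bigID (mem S)) /= lerDl; apply: sumr_ge0 => i _; exact: sqr_ge0.
rewrite -mulr_sumr natrM mulrC; apply: ler_wpM2r => //.
exact: geom_le.
Qed.
End Key.

Lemma box_lem (R : realType) (a b : R) (z : int) :
  `|a - z%:~R| <= 1 -> `|a| <= b -> in_box b z.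
Proof.
move=> h1 h2; have hc := ceil_ge b.
move: h1 h2; rewrite !ler_norml => /andP[h1 h1'] /andP[h2 h2'].
rewrite /in_box; apply/andP; split; rewrite -(ler_int R) ?intrD ?intrN ?intrB /=; lra.
Qed.

Lemma gap_lem (R : realType) (a nu T : R) (z : int) :
  `|a - z%:~R| <= 1 -> nu / T < `|a| -> out_gap nu T z.
Proof.
move=> h1 h2 /andP[l u]; have hf := floor_le (nu / T).
move: l u; rewrite -!(ler_int R) ?intrD ?intrN ?intrB /= => l u.
move: h1 h2; rewrite ler_norml ltr_normr => /andP[h1 h1'] /orP[] h2; lra.
Qed.

Lemma sqrt_bound (R : realType) (u d T c : R) :
  0 <= u -> 0 < d -> 0 < T -> u ^+ 2 * d * T ^+ 2 <= c ->
  u <= Num.sqrt c / (Num.sqrt d * T).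
Proof.
move=> hu hd hT h.
have hsd : 0 < Num.sqrt d by rewrite sqrtr_gt0.
rewrite ler_pdivlMr ?mulr_gt0 //.
have h0 : 0 <= u * (Num.sqrt d * T) by rewrite !mulr_ge0 // ltW.
rewrite -[X in X <= _]ger0_norm // -sqrtr_sqr; apply: ler_wsqrtr.
rewrite !exprMn (sqr_sqrtr (ltW hd)) mulrA; exact: h.
Qed.

Lemma J_big (R : realType) (n : nat) (delta nu : R) (x : 'I_n -> R) :
  0 < nu -> (0 < n)%N -> Incomp delta nu x ->
  delta * n%:R < #|[set e | nu ^+ 2 / n%:R < x e ^+ 2]|%:R.
Proof.
move=> hnu hn [hu hnc]; rewrite ltNge; apply/negP => hle; apply: hnc; split => //.
exists (fun i => if nu ^+ 2 / n%:R < x i ^+ 2 then x i else 0); split.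
  apply: le_trans hle; rewrite ler_nat; apply: subset_leq_card.
  apply/fintype.subsetP => i; rewrite !inE /=; by case: ifP => // _; rewrite eqxx.
have hn' : (0 : R) < n%:R by rewrite ltr0n.
apply: (@le_trans _ _ (Num.sqrt (nu ^+ 2))); last by rewrite sqrtr_sqr ger0_norm // ltW.
apply: ler_wsqrtr.
apply: (@le_trans _ _ (\sum_(i < n) nu ^+ 2 / n%:R)).
  apply: ler_sum => i _; case: ifP => hi.
    by rewrite subrr expr0n /= mulr_ge0 // ?sqr_ge0 // invr_ge0 ltW.
  by rewrite subr0; move/negbT: hi; rewrite -leNgt.
by rewrite sumr_const card_ord -[_ *+ n]mulr_natr divfK // gt_eqF.
Qed.

Unset Implicit Arguments. Set Strict Implicit.

Theorem corollary5p4 (R : realType) :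
  exists C0 : R, 0 < C0 /\
  forall n : nat, (2 <= n)%N ->
  exists Pi : {set {perm 'I_n}}, (#|Pi|%:R <= C0 ^+ n) /\
  forall (C1 c1 : R) (Y : R -> ('I_n -> R) -> R -> R -> ('I_n -> int)),
    0 < C1 -> 0 < c1 -> Y_spec C1 c1 Y ->
  forall (p delta s nu L T : R) (x : 'I_n -> R),
    0 < p <= 2^-1 -> n%:R^-1 <= delta <= 2^-1 -> -1 <= s <= 0 ->
    0 < nu <= 1 -> 1 <= L -> 0 < T ->
    Incomp delta nu x ->
    T / 2 <= Tp p x L <= T ->
    exists2 sigma, sigma \in Pi &
      in_A delta nu T (fun i => Y p x L s (sigma i)).
Proof.
exists 64; split => //.
move=> n hn.
pose K := (2 * n).+2.
pose Pi := [set sortperm K (fun e => nat_of_ord (k e)) | k : {ffun 'I_n -> 'I_K} in Gset n K (5 * n)].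
exists Pi; split.
  apply: (@le_trans _ _ (#|Gset n K (5*n)|%:R)).
    by rewrite ler_nat leq_imset_card.
  apply: le_trans (card_Gset R n K (5*n)) _.
  rewrite -exprD; rewrite nat_6.
  by rewrite exprM -natrX.
move=> C1 c1 Y hC1 hc1 hY p delta s nu L T x hp hd hs hnu hL hT hinc hTp.
have hunit : unit_vec x by case: hinc.
have hn0 : (0 < n)%N by apply: leq_trans hn.
pose J e := nu ^+ 2 / n%:R < x e ^+ 2.
pose kx : {ffun 'I_n -> 'I_K} := [ffun e => inord (2 * gk x e + J e)].
have kval e : (kx e : nat) = (2 * gk x e + J e)%N.
  by rewrite ffunE inordK // nat_kb // gk_le.
have kxG : kx \in Gset n K (5*n).
  rewrite inE; under eq_bigr do rewrite kval.
  rewrite big_split /= -big_distrr /=.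
  have h1 := gk_sum hunit.
  have h2 : (\sum_(e < n) (J e : nat) <= n)%N.
    apply: (@leq_trans (\sum_(e < n) 1)).
      by apply: leq_sum => e _; case: (J e).
    by rewrite sum_nat_const card_ord muln1.
  exact: nat_sum5.
pose kf := fun e : 'I_n => nat_of_ord (kx e).
exists (sortperm K kf); first by apply/imsetP; exists kx.
move=> i.
set e := sortperm K kf i.
have hK : forall e, (kf e < K)%N by move=> e'; exact: ltn_ord.
have hP : #|predset K kf e| = i := sigP K kf i.
have hn' : (0 : R) < n%:R by rewrite ltr0n.
have F1 : x e ^+ 2 * (i.+1)%:R <= 2.
  pose Q := e |: predset K kf e.
  have hQ : #|Q| = i.+1 by rewrite cardsU1 inE ltnn /= hP.
  have hQg : forall e', e' \in Q -> (gk x e <= gk x e')%N.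
    move=> e'; rewrite !inE => /orP[/eqP -> // | h].
    have := code_le_key hK (ltnW h); rewrite /kf !kval.
    exact: nat_mono.
  have hi : (i.+1 <= n)%N := ltn_ord i.
  have hi' : ((i.+1)%:R : R) <= n%:R by rewrite ler_nat.
  have hx0 : 0 <= x e ^+ 2 := sqr_ge0 _.
  case hG: (gk x e) => [|G'].
    have := gk_up hunit e; rewrite hG expr0 => h.
    nra.
  have hlow : forall e', e' \in Q -> (2:R) ^+ G' < n%:R * x e' ^+ 2.
    move=> e' he'; have := @gk_low R n x e' G'.+1 isT; rewrite hG in hQg.
    by apply; exact: hQg.
  have hsum : (i.+1)%:R * (2:R) ^+ G' <= n%:R.
    rewrite -hQ mulr_natl -sumr_const.
    apply: (@le_trans _ _ (\sum_(e' in Q) n%:R * x e' ^+ 2)).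
      by apply: ler_sum => e' he'; apply: ltW; exact: hlow.
    rewrite -mulr_sumr -[X in _ <= X]mulr1; apply: ler_wpM2l => //.
    rewrite -hunit [X in _ <= X](bigID (mem Q)) /= lerDl.
    by apply: sumr_ge0 => j _; exact: sqr_ge0.
  have := gk_up hunit e; rewrite hG => hup.
  have e2 : (2:R) ^+ G'.+1 = 2 * 2 ^+ G' by rewrite exprS.
  rewrite e2 in hup.
  have hI : (0:R) <= (i.+1)%:R := ler0n _ _.
  have hh := ler_wpM2r hI hup.
  rewrite -(ler_pM2l hn'); lra.
have F2 : (i.+1)%:R <= delta * n%:R -> J e.
  move=> hi; case hJ: (J e) => //.
  have hsub : [set e' | J e'] \subset predset K kf e.
    apply/fintype.subsetP => e'; rewrite !inE => hJ'.
    apply: key_lt_code hK _; rewrite /kf !kval hJ hJ'.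
    apply: nat_strict; apply: gk_mono.
    move: hJ; rewrite /J => /negbT; rewrite -leNgt => h1.
    exact: le_trans h1 (ltW hJ').
  have := subset_leq_card hsub; rewrite hP => hc.
  have hb := J_big (proj1 (andP hnu)) hn0 hinc.
  have : (#|[set e' | J e']|%:R : R) <= i%:R by rewrite ler_nat.
  have : (i%:R : R) + 1 = (i.+1)%:R by rewrite -natr1.
  rewrite /J in hb *; lra.
have [ha _ _ _] := hY p x L s hp hs hunit hL.
set T' := Tp p x L in ha hTp.
have hT' : 0 < T' by case/andP: hTp => h1 _; lra.
set a := Num.sqrt n%:R / T' * x e.
have hae : `|a - (Y p x L s e)%:~R| <= 1 := ha e.
set w := Num.sqrt n%:R * `|x e|.
have hw0 : 0 <= w by rewrite mulr_ge0 // sqrtr_ge0.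
have haT : `|a| * T' = w.
  have haT0 : a * T' = Num.sqrt n%:R * x e by rewrite /a; field; rewrite gt_eqF.
  rewrite -{1}(gtr0_norm hT') -normrM haT0 normrM ger0_norm //.
  exact: sqrtr_ge0.
have hw2 : w ^+ 2 = n%:R * x e ^+ 2.
  by rewrite /w exprMn sqr_sqrtr ?ler0n // real_normK // num_real.
have ha0 : 0 <= `|a| := normr_ge0 _.
have hub : `|a| <= 2 * w / T.
  rewrite ler_pdivlMr //; case/andP: hTp => h1 h2; nra.
have hlb : w / T <= `|a|.
  rewrite ler_pdivrMr //; case/andP: hTp => h1 h2; nra.
have hJw : J e -> nu / T < `|a|.
  move=> hJe; apply: lt_le_trans hlb; rewrite ltr_pM2r ?invr_gt0 //.
  have : nu ^+ 2 < w ^+ 2.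
    by rewrite hw2 -ltr_pdivrMl // mulrC; move: hJe; rewrite /J.
  case/andP: hnu => hnu0 _; nra.
have hx1 : x e ^+ 2 <= 1 := sq_le1 hunit e.
have hdp : 0 < delta.
  case/andP: hd => h1 _; apply: lt_le_trans h1; by rewrite invr_gt0.
have hdn : 1 <= delta * n%:R.
  case/andP: hd => h1 _; have h2 := ler_wpM2r (ltW hn') h1.
  by rewrite mulVf ?gt_eqF in h2.
have hu2 : (2 * w / T) ^+ 2 * delta * T ^+ 2 = 4 * (n%:R * x e ^+ 2 * delta).
  by rewrite -hw2; field; rewrite gt_eqF.
have hu0 : 0 <= 2 * w / T by apply: divr_ge0; [apply: mulr_ge0 | apply: ltW].
rewrite /in_A /in_Ai; split.
- move=> [hi0]; have hi : i = 0%N :> nat by [].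
  have hie : (i.+1)%:R <= delta * n%:R by rewrite hi.
  split; last by apply: gap_lem hae _; apply: hJw; apply: F2.
  apply: box_lem hae _; apply: le_trans hub _.
  rewrite ler_pM2r ?invr_gt0 // ler_pM2l //; rewrite /w.
  rewrite -[X in _ <= X]mulr1 ler_pM2l ?sqrtr_gt0 ?ltr0n //.
  have : `|x e| ^+ 2 <= 1 by rewrite real_normK ?num_real.
  have := normr_ge0 (x e); nra.
- move=> j hj1 hj hI.
  set P := (2 : R) ^+ j in hj hI.
  have hP2 : 2 <= P.
    have h12 : (1:R) <= 2 by lra.
    by have := ler_weXn2l h12 hj1; rewrite expr1.
  have hP0 : 0 < P by lra.
  case/andP: hI => hI1 hI2.
  have hIl : delta * n%:R < (i.+1)%:R * P by rewrite -ltr_pdivrMr.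
  have hIu : (i.+1)%:R * P <= delta * n%:R * 2 by rewrite -ler_pdivlMr.
  have hie : (i.+1)%:R <= delta * n%:R.
    have h0 : (0:R) <= (i.+1)%:R := ler0n _ _. nra.
  split; last by apply: gap_lem hae _; apply: hJw; apply: F2.
  apply: box_lem hae _; apply: le_trans hub _.
  apply: sqrt_bound => //; rewrite hu2 exprD /=.
  have hxI : x e ^+ 2 * (delta * n%:R) <= x e ^+ 2 * ((i.+1)%:R * P).
    by rewrite ler_wpM2l ?sqr_ge0 // ltW.
  have hF1P := ler_wpM2r (ltW hP0) F1.
  have -> : (2:R) ^+ 3 = 8 by rewrite -natrX.
  rewrite -/P; lra.
- move=> hI.
  apply: box_lem hae _; apply: le_trans hub _.
  apply: sqrt_bound => //; rewrite hu2.
  have hxI : x e ^+ 2 * (delta * n%:R) <= x e ^+ 2 * (i.+1)%:R.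
    by rewrite ler_wpM2l ?sqr_ge0 // ltW.
  lra.
Qed.
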